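(* Let $s_1\in\mathbb{Q}$ with $0<s_1<1$ and put $u_1=\frac{1-s_1^2}{2s_1}$. Let $m\in\mathbb{Q}$ with $0<m<\sqrt2-1$, and let $\alpha\in(0,\pi/4)$ be the angle with generator $m$, so that $\cos\alpha=\frac{1-m^2}{1+m^2}$ and $\sin\alpha=\frac{2m}{1+m^2}$. Write $\omega_\pm=\omega_\pm(\alpha)=\cos\alpha\pm\sin\alpha$. (a) For nonzero real numbers $s_2,s_3,s_4$, with $Q=s_3s_4$, the system $$s_2s_3=\omega_-,\qquad s_2s_3=Q\,\omega_+,\qquad s_2\,\omega_+=2u_1\,\omega_-+s_4$$ holds if and only if $$s_2=2u_1\cot(2\alpha),\qquad s_3=\frac{\omega_-}{s_2},\qquad s_4=\frac{s_2}{\omega_+}.$$ (b) Let $s_2,s_3,s_4$ be given by these formulas, and suppose $0<s_k<1$ for $k=2,3,4$. Put $u_k=\frac{1-s_k^2}{2s_k}$ and $v_k=\frac{1+s_k^2}{2s_k}$ for $k=1,2,3,4$. Then all $u_k,v_k$ are positive rational numbers satisfying $$1+u_k^2=v_k^2\ (k=1,2,3,4),\qquad 2u_1^2+2u_2^2=u_3^2+u_4^2 .$$ Consequently, writing $x$ for a common denominator and $y=xu_1$, $z=xu_2$, $c_1=xu_3$, $c_2=xu_4$, $a=xv_1$, $b=xv_2$, $d_1=xv_3$, $d_2=xv_4$, the numbers satisfy $x^2+y^2=a^2$, $x^2+z^2=b^2$, $x^2+c_1^2=d_1^2$, $x^2+c_2^2=d_2^2$, $2y^2+2z^2=c_1^2+c_2^2$,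 i.e. they form a rational (after scaling, perfect) leaning box.
   Context: The generator of an angle $\theta$ is $m(\theta)=\frac{\sin\theta}{1+\cos\theta}=\tan(\theta/2)$. A leaning box is a parallelepiped with edges $x,y,z$ whose faces spanned by $(x,y)$ and $(x,z)$ are rectangles (diagonals $a$, $b$) and whose face spanned by $(y,z)$ is a parallelogram with diagonals $c_1,c_2$; its two distinct body diagonals are $d_1,d_2$. It is perfect if all nine quantities are positive integers. *)

(* Defs.v *)
From Stdlib Require Import Reals QArith Qreals List.
Open Scope R_scope.

Definition is_rat (x : R) : Prop := exists q : Q, Q2R q = x.

Definition cot (x : R) : R := cos x / sin x.

(* the angle whose generator m(theta) = tan(theta/2) is m, taken in (-pi,pi) *)
Definition angle_of_gen (m : R) : R := 2 * atan m.

Definition omega_p (a : R) : R := cos a + sin a.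
Definition omega_m (a : R) : R := cos a - sin a.

Definition uu (s : R) : R := (1 - s ^ 2) / (2 * s).
Definition vv (s : R) : R := (1 + s ^ 2) / (2 * s).

(* Main.v *)
Require Import Defs.
From Stdlib Require Import Reals QArith Qreals List Lra Lia Psatz.
Open Scope R_scope.

Lemma cos_al m : cos (angle_of_gen m) = (1 - m^2)/(1+m^2).
Proof.
  unfold angle_of_gen. rewrite cos_2a, cos_atan, sin_atan.
  assert (Hp : 0 < 1 + m²) by (unfold Rsqr; nra).
  assert (Hs := sqrt_lt_R0 _ Hp).
  assert (Hq : sqrt (1+m²) * sqrt (1+m²) = 1 + m²) by (apply sqrt_sqrt; lra).
  unfold Rsqr in *. field_simplify; try lra. rewrite !pow2_sqrt; try lra.
  field. lra.
Qed.
Lemma sin_al m : sin (angle_of_gen m) = 2*m/(1+m^2).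
Proof.
  unfold angle_of_gen. rewrite sin_2a, cos_atan, sin_atan.
  assert (Hp : 0 < 1 + m²) by (unfold Rsqr; nra).
  assert (Hs := sqrt_lt_R0 _ Hp).
  unfold Rsqr in *. field_simplify; try lra. rewrite !pow2_sqrt; try lra.
field; lra.
Qed.

Definition is_int (r : R) := exists k : Z, r = IZR k.

Lemma rat_Q (q : Q) : is_rat (Q2R q). Proof. exists q; auto. Qed.
Lemma rat_plus x y : is_rat x -> is_rat y -> is_rat (x + y).
Proof. intros [a <-] [b <-]. exists (a+b)%Q. apply Q2R_plus. Qed.
Lemma rat_mult x y : is_rat x -> is_rat y -> is_rat (x * y).
Proof. intros [a <-] [b <-]. exists (a*b)%Q. apply Q2R_mult. Qed.
Lemma rat_opp x : is_rat x -> is_rat (- x).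
Proof. intros [a <-]. exists (-a)%Q. apply Q2R_opp. Qed.
Lemma rat_minus x y : is_rat x -> is_rat y -> is_rat (x - y).
Proof. intros. unfold Rminus. apply rat_plus; auto. apply rat_opp; auto. Qed.
Lemma rat_inv x : is_rat x -> is_rat (/ x).
Proof. intros [a <-]. destruct (Qeq_dec a 0) as [h|h].
  - exists 0%Q. apply Qeq_eqR in h. rewrite h. unfold Q2R; simpl. rewrite Rmult_0_l, Rinv_0. lra.
  - exists (/a)%Q. apply Q2R_inv; auto. Qed.
Lemma rat_div x y : is_rat x -> is_rat y -> is_rat (x / y).
Proof. intros. unfold Rdiv. apply rat_mult; auto. apply rat_inv; auto. Qed.
Lemma rat_1 : is_rat 1. Proof. exists 1%Q. unfold Q2R; simpl. lra. Qed.
Lemma rat_2 : is_rat 2. Proof. exists 2%Q. unfold Q2R; simpl. lra. Qed.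
Lemma rat_pow x n : is_rat x -> is_rat (x ^ n).
Proof. intros h. induction n; simpl. apply rat_1. apply rat_mult; auto. Qed.

Lemma rat_den r : is_rat r -> exists d : nat, (0 < d)%nat /\ is_int (INR d * r).
Proof.
  intros [q <-]. exists (Pos.to_nat (Qden q)). split. lia.
  exists (Qnum q). unfold Q2R. rewrite INR_IZR_INZ, Znat.positive_nat_Z.
  field. apply not_0_IZR. lia.
Qed.

Lemma int_mult_nat (n : nat) r : is_int r -> is_int (INR n * r).
Proof. intros [k ->]. exists (Z.of_nat n * k)%Z. rewrite mult_IZR, INR_IZR_INZ. auto. Qed.

Lemma common_den l : Forall is_rat l ->
  exists d : nat, (0 < d)%nat /\ Forall (fun r => is_int (INR d * r)) l.
Proof.
  induction 1 as [|r l Hr Hl IH].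
  - exists 1%nat. split; auto.
  - destruct IH as [d [Hd Hf]]. destruct (rat_den r Hr) as [d0 [Hd0 Hi]].
    exists (d * d0)%nat. split. lia. constructor.
    + rewrite mult_INR, Rmult_assoc. apply int_mult_nat; auto.
    + eapply Forall_impl; [|exact Hf]. intros a Ha. simpl in Ha.
      replace (INR (d*d0) * a) with (INR d0 * (INR d * a)) by (rewrite mult_INR; ring).
      apply int_mult_nat; auto.
Qed.

Lemma int_pos_nat r : is_int r -> 0 < r -> exists n : nat, (0 < n)%nat /\ INR n = r.
Proof.
  intros [k ->] H. apply lt_IZR in H. exists (Z.to_nat k). split. lia.
  rewrite INR_IZR_INZ, Znat.Z2Nat.id; auto. lia.
Qed.

Lemma pyth (x y a : nat) u v : INR y = INR x * u -> INR a = INR x * v -> 1 + u^2 = v^2 ->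
  (x * x + y * y = a * a)%nat.
Proof.
  intros Hy Ha H. apply INR_eq. rewrite plus_INR, !mult_INR, Hy, Ha.
  transitivity (INR x ^ 2 * (1 + u^2)). ring. rewrite H. ring.
Qed.

Lemma uv_props s : 0 < s < 1 -> is_rat s ->
  0 < uu s /\ 0 < vv s /\ is_rat (uu s) /\ is_rat (vv s) /\ 1 + uu s ^ 2 = vv s ^ 2.
Proof.
  intros H Hr. unfold uu, vv. repeat split.
  - apply Rdiv_lt_0_compat; nra.
  - apply Rdiv_lt_0_compat; nra.
  - apply rat_div. apply rat_minus. apply rat_1. apply rat_pow; auto. apply rat_mult; auto. apply rat_2.
  - apply rat_div. apply rat_plus. apply rat_1. apply rat_pow; auto. apply rat_mult; auto. apply rat_2.
  - field. lra.
Qed.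
Lemma part_a C S u s2 s3 s4 : C*C+S*S = 1 -> 0 < C -> 0 < S ->
  s2 <> 0 -> s3 <> 0 -> s4 <> 0 ->
  (s2 * s3 = C - S /\ s2 * s3 = s3 * s4 * (C+S) /\ s2 * (C+S) = 2*u*(C-S) + s4) <->
  (s2 = 2*u*((C*C-S*S)/(2*S*C)) /\ s3 = (C-S)/s2 /\ s4 = s2/(C+S)).
Proof.
  intros HCS HC HS n2 n3 n4.
  assert (K: (C+S)*(C+S) = 1 + 2*S*C) by nra.
  split.
  - intros [h1 [h2 h3]].
    assert (E: s3 * (s2 - s4*(C+S)) = 0) by (rewrite Rmult_minus_distr_l; lra).
    apply Rmult_integral in E. destruct E as [E|E]; [contradiction|].
    assert (h4 : s4 = s2/(C+S)) by (replace s2 with (s4*(C+S)) by lra; field; lra).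
    split; [|split; [rewrite <- h1; field; auto | exact h4]].
    rewrite h4 in h3.
    assert (h5: s2*((C+S)*(C+S)) = (2*u*(C-S))*(C+S) + s2).
    { replace (s2*((C+S)*(C+S))) with ((s2*(C+S))*(C+S)) by ring. rewrite h3. field. lra. }
    rewrite K in h5.
    apply Rmult_eq_reg_r with (2*S*C); [|nra].
    field_simplify; try lra.
  - intros [h1 [h2 h3]]. split; [|split].
    + rewrite h2. field. auto.
    + rewrite h2, h3. field. split; auto. lra.
    + rewrite h3. replace (s2*(C+S)) with (s2*((C+S)*(C+S))/(C+S)) by (field; lra).
      rewrite K, h1. field. repeat split; lra.
Qed.

Ltac rat_tac := repeat (first [assumption | apply rat_1 | apply rat_2 | apply rat_div | apply rat_minus | apply rat_plus | apply rat_mult | apply rat_pow | apply rat_opp]).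

Lemma om_al m : omega_m (angle_of_gen m) = (1 - m^2 - 2*m)/(1+m^2).
Proof. unfold omega_m. rewrite cos_al, sin_al. field. nra. Qed.
Lemma op_al m : omega_p (angle_of_gen m) = (1 - m^2 + 2*m)/(1+m^2).
Proof. unfold omega_p. rewrite cos_al, sin_al. field. nra. Qed.
Lemma cot2_al m : cot (2 * angle_of_gen m) = ((1-m^2)*(1-m^2) - 4*m^2)/(4*m*(1-m^2)).
Proof. unfold cot. rewrite sin_2a, cos_2a, cos_al, sin_al. field. Abort.

Lemma ident_b (s1 m : R) :
  0 < s1 < 1 -> 0 < m < 1 ->
  let al := angle_of_gen m in
  let s2 := 2 * uu s1 * cot (2 * al) in
   let s3 := omega_m al / s2 in
   let s4 := s2 / omega_p al in
   0 < s2 < 1 -> 0 < s3 < 1 -> 0 < s4 < 1 ->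
   2 * uu s1 ^ 2 + 2 * uu s2 ^ 2 = uu s3 ^ 2 + uu s4 ^ 2.
Proof.
  intros H1 Hm al s2 s3 s4 h2 h3 h4.
  assert (A : 1 - m^2 - 2*m <> 0).
  { intro E. unfold s3, al in h3. rewrite om_al, E in h3. unfold Rdiv in h3. lra. }
  assert (B : 1 - m^2 + 2*m <> 0) by nra.
  unfold s3, s4, s2 , omega_m, omega_p, cot, al in *. rewrite sin_2a, cos_2a, cos_al, sin_al. unfold uu.
  field. repeat split; try nra.
Qed.
Theorem theorem1 (s1 m : R) :
  is_rat s1 -> 0 < s1 < 1 ->
  is_rat m -> 0 < m < sqrt 2 - 1 ->
  let al := angle_of_gen m in
  let u1 := uu s1 in
  (* (a) *)
  (forall s2 s3 s4 : R, s2 <> 0 -> s3 <> 0 -> s4 <> 0 ->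
     let Q := s3 * s4 in
     (s2 * s3 = omega_m al /\ s2 * s3 = Q * omega_p al /\
      s2 * omega_p al = 2 * u1 * omega_m al + s4)
     <->
     (s2 = 2 * u1 * cot (2 * al) /\ s3 = omega_m al / s2 /\ s4 = s2 / omega_p al))
  /\
  (* (b) *)
  (let s2 := 2 * u1 * cot (2 * al) in
   let s3 := omega_m al / s2 in
   let s4 := s2 / omega_p al in
   0 < s2 < 1 -> 0 < s3 < 1 -> 0 < s4 < 1 ->
   (forall s, In s (s1 :: s2 :: s3 :: s4 :: nil) ->
      0 < uu s /\ 0 < vv s /\ is_rat (uu s) /\ is_rat (vv s) /\
      1 + uu s ^ 2 = vv s ^ 2) /\
   2 * uu s1 ^ 2 + 2 * uu s2 ^ 2 = uu s3 ^ 2 + uu s4 ^ 2 /\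
   (* a perfect leaning box obtained by scaling with a common denominator x *)
   exists x y z c1 c2 a b d1 d2 : nat,
     (0 < x)%nat /\ (0 < y)%nat /\ (0 < z)%nat /\ (0 < c1)%nat /\ (0 < c2)%nat /\
     (0 < a)%nat /\ (0 < b)%nat /\ (0 < d1)%nat /\ (0 < d2)%nat /\
     INR y = INR x * uu s1 /\ INR z = INR x * uu s2 /\
     INR c1 = INR x * uu s3 /\ INR c2 = INR x * uu s4 /\
     INR a = INR x * vv s1 /\ INR b = INR x * vv s2 /\
     INR d1 = INR x * vv s3 /\ INR d2 = INR x * vv s4 /\
     (x * x + y * y = a * a)%nat /\ (x * x + z * z = b * b)%nat /\
     (x * x + c1 * c1 = d1 * d1)%nat /\ (x * x + c2 * c2 = d2 * d2)%nat /\
     (2 * (y * y) + 2 * (z * z) = c1 * c1 + c2 * c2)%nat).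
Proof.
  intros Hr1 H1 Hrm Hm al u1.
  assert (Hm1 : m < 1).
  { assert (h := sqrt_lt_R0 2 ltac:(lra)). assert (h' := sqrt_sqrt 2 ltac:(lra)). nra. }
  assert (Hmm : 0 < m < 1) by lra.
  split.
  - intros s2 s3 s4 n2 n3 n4 Q. unfold Q, omega_m, omega_p, cot. rewrite sin_2a, cos_2a.
    apply part_a; auto.
    + unfold al. rewrite cos_al, sin_al. field. nra.
    + unfold al. rewrite cos_al. apply Rdiv_lt_0_compat; nra.
    + unfold al. rewrite sin_al. apply Rdiv_lt_0_compat; nra.
  - intros s2 s3 s4 h2 h3 h4.
    assert (r2 : is_rat s2).
    { unfold s2, u1, al. unfold cot. rewrite sin_2a, cos_2a, cos_al, sin_al. unfold uu. rat_tac. }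
    assert (r3 : is_rat s3).
    { unfold s3, al. rewrite om_al. rat_tac. }
    assert (r4 : is_rat s4).
    { unfold s4, al. rewrite op_al. rat_tac. }
    assert (P1 := uv_props s1 H1 Hr1).
    assert (P2 := uv_props s2 h2 r2).
    assert (P3 := uv_props s3 h3 r3).
    assert (P4 := uv_props s4 h4 r4).
    assert (I := ident_b s1 m H1 Hmm h2 h3 h4).
    split.
    { intros s Hin. simpl in Hin. destruct Hin as [<-|[<-|[<-|[<-|[]]]]]; auto. }
    split; [exact I|].
    destruct P1 as [pu1 [pv1 [ru1 [rv1 e1]]]].
    destruct P2 as [pu2 [pv2 [ru2 [rv2 e2]]]].
    destruct P3 as [pu3 [pv3 [ru3 [rv3 e3]]]].
    destruct P4 as [pu4 [pv4 [ru4 [rv4 e4]]]].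
    destruct (common_den (uu s1 :: uu s2 :: uu s3 :: uu s4 :: vv s1 :: vv s2 :: vv s3 :: vv s4 :: nil))
      as [x [Hx Hf]].
    { repeat constructor; auto. }
    repeat match type of Hf with Forall _ (_ :: _) => let K := fresh "K" in apply Forall_cons_iff in Hf; destruct Hf as [K Hf]; simpl in K end.
    assert (Px : 0 < INR x) by (apply lt_0_INR; lia).
    destruct (int_pos_nat _ K ltac:(nra)) as [y [Hy Ey]].
    destruct (int_pos_nat _ K0 ltac:(nra)) as [z [Hz Ez]].
    destruct (int_pos_nat _ K1 ltac:(nra)) as [c1 [Hc1 Ec1]].
    destruct (int_pos_nat _ K2 ltac:(nra)) as [c2 [Hc2 Ec2]].
    destruct (int_pos_nat _ K3 ltac:(nra)) as [a [Ha Ea]].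
    destruct (int_pos_nat _ K4 ltac:(nra)) as [b [Hb Eb]].
    destruct (int_pos_nat _ K5 ltac:(nra)) as [d1 [Hd1 Ed1]].
    destruct (int_pos_nat _ K6 ltac:(nra)) as [d2 [Hd2 Ed2]].
    exists x, y, z, c1, c2, a, b, d1, d2.
    do 17 (split; [assumption|]).
    split; [eapply pyth; eauto|].
    split; [eapply pyth; eauto|].
    split; [eapply pyth; eauto|].
    split; [eapply pyth; eauto|].
    apply INR_eq. rewrite !plus_INR, !mult_INR, Ey, Ez, Ec1, Ec2. simpl (INR 2).
    assert (J : INR x ^ 2 * (2 * uu s1 ^ 2 + 2 * uu s2 ^ 2) = INR x ^ 2 * (uu s3 ^ 2 + uu s4 ^ 2))
      by (f_equal; exact I).
    transitivity (INR x ^ 2 * (2 * uu s1 ^ 2 + 2 * uu s2 ^ 2)). ring.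
    rewrite J. ring.
Qed.
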